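(* Fix a step $t$ and an arm $i$. If the last $\min\{D,t\}$ steps were played as a round robin over a set of arms of size at least $R$, then $$\Pr\Big[m_t(i)\le\frac{2d(i)}{R}+16\log T+2\Big]\ge 1-\frac{1}{T^2}.$$
   Context: Delay-as-payoff bandit: $K$ arms, horizon $T$, maximum delay $D\in\mathbb{N}$. Arm $i$ has an unknown distribution $\mathcal{D}_i$ on $\{0,1,\dots,D\}$; at each step $s$ the agent picks an arm $i_s$ and a delay $d_s\sim\mathcal{D}_{i_s}$ is drawn independently of everything else, its value being revealed at time $s+d_s$. Let $d(i)=\mathbb{E}_{X\sim\mathcal{D}_i}[X]$ be the expected delay of arm $i$. The number of missing plays of arm $i$ at time $t$ is $m_t(i)=|\{s\le t: i_s=i,\ s+d_s\ge t\}|$. ''Played as a round robin over a set of size at least $R$'' means the steps are organized in rounds, each round playing every arm of the current set exactly once, where the current set always has at least $R$ elements. *)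

(* Defs.v *)
From HB Require Import structures.
From mathcomp Require Import all_boot all_order all_algebra.
From mathcomp Require Import all_classical all_reals exp.
Set Implicit Arguments. Unset Strict Implicit. Unset Printing Implicit Defensive.
Import Order.TTheory GRing.Theory Num.Theory.
Local Open Scope ring_scope.

(* Conventions.
   - Arms are ['I_K]; steps are 1, 2, ...; the (deterministic) arm schedule is
     [a : nat -> 'I_K], [a s] being the arm played at step [s].
   - Arm [i] has delay distribution [p i : 'I_D.+1 -> R] on {0,...,D}
     (nonnegative, summing to 1).
   - The delays of steps 1..t form a vector [d : {ffun 'I_t -> 'I_D.+1}],
     [d j] being the delay of step [j.+1]; they are independent with
     d_s ~ p (a s), i.e. the law of [d] is the product measure below. *)

Definition exp_delay (R : realType) (K D : nat) (p : 'I_K -> 'I_D.+1 -> R)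
  (i : 'I_K) : R := \sum_(x < D.+1) (x : nat)%:R * p i x.

Definition prob_delays (R : realType) (K D t : nat) (p : 'I_K -> 'I_D.+1 -> R)
  (a : nat -> 'I_K) (E : pred {ffun 'I_t -> 'I_D.+1}) : R :=
  \sum_(d : {ffun 'I_t -> 'I_D.+1} | E d) \prod_(j < t) p (a j.+1) (d j).

Definition missing (K D t : nat) (a : nat -> 'I_K)
  (d : {ffun 'I_t -> 'I_D.+1}) (i : 'I_K) : nat :=
  #|[set j : 'I_t | (a j.+1 == i) && (t <= j.+1 + d j)%N]|.

(* The sequence of arms [w] (played on consecutive steps) is played as a round
   robin over a set of size at least [r]: it splits into consecutive rounds,
   round k playing distinct arms of its current set S_k (with #|S_k| >= r),
   every arm of S_k exactly once; only the first and the last round may be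
   cut by the boundaries of the window (partial rounds). *)
Definition round_robin (K r : nat) (w : seq 'I_K) : Prop :=
  exists (rs : seq (seq 'I_K)) (S : seq {set 'I_K}),
    [/\ size S = size rs, w = flatten rs &
      forall k, (k < size rs)%N ->
        [/\ (r <= #|nth (finset.set0 : {set 'I_K}) S k|)%N,
            uniq (nth [::] rs k),
            {subset nth [::] rs k <= nth (finset.set0 : {set 'I_K}) S k} &
            (0 < k < (size rs).-1)%N -> size (nth [::] rs k) = #|nth (finset.set0 : {set 'I_K}) S k| ]].

Definition last_window (K D t : nat) (a : nat -> 'I_K) : seq 'I_K :=
  [seq a s | s <- iota (t - minn D t).+1 (minn D t)].

(* Main.v *)
Require Import Defs.
From HB Require Import structures.
From mathcomp Require Import all_boot all_order all_algebra.
From mathcomp Require Import all_classical all_reals exp.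
From mathcomp Require Import sequences.
From mathcomp Require Import zify ring lra.
Import Order.TTheory GRing.Theory Num.Theory.
Local Open Scope ring_scope.

Local Close Scope ring_scope.
Lemma rrQ (K r : nat) (i : 'I_K) (rs : seq (seq 'I_K)) :
 (forall k, (k < size rs)%N -> uniq (nth [::] rs k)) ->
 (forall k, (k < (size rs).-1)%N -> (r <= size (nth [::] rs k))%N) ->
 (r * count_mem i (flatten rs) <= size (flatten rs) + r)%N.
Proof.
elim: rs => [|r0 rs IH] Hu Hs /=; first by rewrite muln0.
have u0 : uniq r0 by apply: (Hu 0%N).
have c0 : (count_mem i r0 <= 1)%N by rewrite count_uniq_mem // leq_b1.
rewrite count_cat size_cat.
case: rs IH Hu Hs => [|r1 rs] IH Hu Hs.
  move: (count_mem i r0) c0 => x c0 /=; nia.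
have H1 := IH (fun k hk => Hu k.+1 hk) (fun k hk => Hs k.+1 hk).
have H0 : (r <= size r0)%N by apply: (Hs 0%N).
move: (count_mem i r0) c0 (count_mem i (flatten (r1 :: rs))) H1 => x c0 y H1; nia.
Qed.

Lemma rrP (K r : nat) (i : 'I_K) (rs : seq (seq 'I_K)) : (0 < r)%N ->
 (forall k, (k < size rs)%N -> uniq (nth [::] rs k)) ->
 (forall k, (0 < k < (size rs).-1)%N -> (r <= size (nth [::] rs k))%N) ->
 forall n, (r * count_mem i (drop n (flatten rs)) + 1 <= size (drop n (flatten rs)) + 2 * r)%N.
Proof.
move=> r0p; elim: rs => [|r0 rs IH] Hu Hs n /=; first by case: n => /= *; lia.
rewrite drop_cat.
case: ltnP => hn.
  have u0 : uniq (drop n r0) by apply: drop_uniq; apply: (Hu 0%N).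
  have c0 : (count_mem i (drop n r0) <= 1)%N by rewrite count_uniq_mem // leq_b1.
  have s0 : (1 <= size (drop n r0))%N by rewrite size_drop; lia.
  have Hs' : forall k, (k < (size rs).-1)%N -> (r <= size (nth [::] rs k))%N.
    move=> k hk; apply: (Hs k.+1); move: hk; rewrite /=; case: (size rs) => // *; lia.
  have H1 := @rrQ K r i rs (fun k hk => Hu k.+1 hk) Hs'.
  rewrite count_cat size_cat.
  move: (count_mem i (drop n r0)) c0 (count_mem i (flatten rs)) H1 => x c0 y H1; nia.
apply: IH => [k hk|k hk]; first exact: (Hu k.+1).
apply: (Hs k.+1); case/andP: hk => _ hk; apply/andP; split => //.
move: hk; case: rs {Hu Hs} => //= ? ? ; lia.
Qed.

Lemma cnt_bound K D t r (a : nat -> 'I_K) (i : 'I_K) x : (0 < r)%N -> (x <= D)%N ->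
  round_robin r (last_window D t a) ->
  (r * \sum_(j < t) ((a j.+1 == i) && (t <= j.+1 + x)%N) <= x + 3 * r)%N.
Proof.
move=> r0 xD [rs [S [hS hw H]]].
have Hu : forall k, (k < size rs)%N -> uniq (nth [::] rs k).
  by move=> k /H [].
have Hs : forall k, (0 < k < (size rs).-1)%N -> (r <= size (nth [::] rs k))%N.
  move=> k hk; have hk' : (k < size rs)%N by move: hk; case: (size rs) => //= *; lia.
  by case: (H k hk') => h1 _ _ /(_ hk) ->.
have key := @rrP K r i rs r0 Hu Hs; rewrite -hw in key.
have E1 : \sum_(j < t) ((a j.+1 == i) && (t <= j.+1 + x)%N : nat) =
   count (fun j => (a j.+1 == i) && (t <= j.+1 + x)%N) (iota 0 t).
  rewrite -(big_mkord xpredT (fun j => ((a j.+1 == i) && (t <= j.+1 + x)%N : nat))).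
  rewrite /index_iota subn0 -sum1_count [RHS]big_mkcond; apply: eq_bigr => j _.
  by case: ifP.
rewrite E1; set m := minn D t; set L := minn x.+1 t.
have -> : t = (t - L + L)%N by lia.
rewrite iotaD count_cat add0n.
have -> : count (fun j => (a j.+1 == i) && (t - L + L <= j.+1 + x)%N) (iota 0 (t - L)) = 0%N.
  rewrite (@eq_in_count _ _ pred0) ?count_pred0 // => j; rewrite mem_iota /=.
  move=> hj; rewrite (_ : (t - L + L <= j.+1 + x)%N = false) ?andbF //; lia.
have -> : count (fun j => (a j.+1 == i) && (t - L + L <= j.+1 + x)%N) (iota (t - L) L) =
          count_mem i (map a (iota (t - L).+1 L)).
  rewrite -add1n iotaDl !count_map; apply: eq_in_count => j; rewrite mem_iota /= => hj.
  rewrite add1n (_ : (t - L + L <= j.+1 + x)%N = true) ?andbT //; lia.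
have Ew : last_window D t a = map a (iota (t - m).+1 m) by [].
case: (leqP L m) => hLm.
  have Ei : iota (t - m).+1 m = iota (t - m).+1 (m - L) ++ iota (t - L).+1 L.
    rewrite -[X in iota _ X](subnK hLm) iotaD; congr (_ ++ iota _ _); lia.
  have := key (m - L); rewrite Ew Ei map_cat drop_size_cat ?size_map ?size_iota //.
  move: (count_mem i _) => c; lia.
have Ei : iota (t - L).+1 L = (t - L).+1 :: iota (t - m).+1 m.
  have -> : L = m.+1 by lia.
  by rewrite /= ; congr (_ :: iota _ _); lia.
have := key 0%N; rewrite drop0 Ew Ei map_cons /= size_map size_iota.
move: (count_mem i (map a (iota (t - m).+1 m))) => c.
case: (a (t - L).+1 == i) => /=; lia.
Qed.

Local Open Scope ring_scope.

Lemma prod_factor (R : realType) t D (f : 'I_t -> 'I_D.+1 -> R) :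
 \sum_(d : {ffun 'I_t -> 'I_D.+1}) \prod_(j < t) f j (d j) = \prod_(j < t) \sum_(y < D.+1) f j y.
Proof. by rewrite bigA_distr_bigA. Qed.

Lemma ln2_ge0 (R : realType) : 2^-1 <= ln (2 : R).
Proof.
have h : (-1 : R) < - 2^-1 by rewrite ltrN2 invf_lt1 // ltr1n.
have := le_ln1Dx h.
have -> : 1 + - 2^-1 = (2 : R)^-1 by field.
by rewrite lnV ?qualifE //= lerN2.
Qed.

Lemma ln2_ge (R : realType) : 1 <= 2 * ln (2 : R).
Proof. by rewrite -[leLHS](@mulfV R 2) ?ler_pM2l ?ln2_ge0 ?pnatr_eq0. Qed.

Lemma expR_lam (R : realType) (b : bool) : expR (ln (2 : R) * (b : nat)%:R) = 1 + (b : nat)%:R.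
Proof.
case: b => /=; last by rewrite mulr0 expR0 addr0.
rewrite mulr1 lnK; [lra | by rewrite qualifE /=; lra]. Qed.

Lemma missingE (R : realType) K D t (a : nat -> 'I_K) (d : {ffun 'I_t -> 'I_D.+1}) i :
  ((missing a d i)%:R : R) = \sum_(j < t) (((a j.+1 == i) && (t <= j.+1 + d j)%N) : nat)%:R.
Proof.
rewrite /missing -sum1_card big_mkcond natr_sum /=; apply: eq_bigr => j _.
by rewrite inE; case: ifP.
Qed.

Theorem lemma1 (R : realType) (K D T r t : nat) (i : 'I_K)
  (p : 'I_K -> 'I_D.+1 -> R) (a : nat -> 'I_K) :
  (forall j x, 0 <= p j x) ->
  (forall j, \sum_(x < D.+1) p j x = 1) ->
  (0 < r)%N -> (1 <= t <= T)%N ->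
  round_robin r (last_window D t a) ->
  1 - 1 / (T%:R ^+ 2) <=
  prob_delays p a (fun d : {ffun 'I_t -> 'I_D.+1} => (missing a d i)%:R
                     <= 2 * exp_delay p i / r%:R + 16 * ln (T%:R : R) + 2).
Proof.
move=> p0 p1 r0 /andP[t1 tT] rr.
set B := 2 * exp_delay p i / r%:R + 16 * ln (T%:R : R) + 2.
set E := (fun d : {ffun 'I_t -> 'I_D.+1} => (missing a d i)%:R <= B).
set w := fun d : {ffun 'I_t -> 'I_D.+1} => \prod_(j < t) p (a j.+1) (d j).
have w0 : forall d, 0 <= w d by move=> d; apply: prodr_ge0 => j _.
have Z1 : \sum_d w d = 1.
  rewrite /w /= (@prod_factor R t D (fun j y => p (a j.+1) y)) big1 // => j _; exact: p1.
have Hprob : prob_delays p a E = 1 - \sum_(d | ~~ E d) w d.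
  by rewrite -Z1 (bigID E) /= addrK.
rewrite Hprob lerD2l lerN2.
case: (ltngtP T 1) => hT; first lia; last first.
  rewrite hT expr1n divr1 -Z1 [X in _ <= X](bigID (fun d => ~~ E d)) /= lerDl.
  by apply: sumr_ge0 => d _.
set lam := ln (2 : R).
have lam_ge : 1 <= 2 * lam := ln2_ge R.
set c := fun (j : 'I_t) (y : 'I_D.+1) => ((a j.+1 == i) && (t <= j.+1 + y)%N).
set q := fun j : 'I_t => \sum_(y < D.+1) p (a j.+1) y * (c j y : nat)%:R.
have S3 : \sum_(d | ~~ E d) w d <=
    \sum_d w d * expR (lam * (missing a d i)%:R - lam * B).
  rewrite big_mkcond; apply: ler_sum => d _; case: ifP => hE.
    apply: ler_peMr => //; apply: ltW; rewrite expR_gt1 -mulrBr mulr_gt0 //.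
      lra.
    move: hE; rewrite /E -ltNge; lra.
  by apply: mulr_ge0 => //; apply: expR_ge0.
have S4 : \sum_d w d * expR (lam * (missing a d i)%:R - lam * B) =
    expR (- (lam * B)) * \prod_(j < t) (1 + q j).
  transitivity (\sum_(d : {ffun 'I_t -> 'I_D.+1}) expR (- (lam * B)) *
      \prod_(j < t) (p (a j.+1) (d j) * (1 + (c j (d j) : nat)%:R))).
    apply: eq_bigr => d _.
    rewrite expRD [expR _ * expR _]mulrC mulrCA; congr (_ * _).
    rewrite missingE mulr_sumr expR_sum big_split /=; congr (_ * _).
    by apply: eq_bigr => j _; rewrite expR_lam.
  rewrite -mulr_sumr (@prod_factor R t D (fun j y => p (a j.+1) y * (1 + (c j y : nat)%:R))).
  congr (_ * _); apply: eq_bigr => j _.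
  rewrite /q; under eq_bigr do rewrite mulrDr mulr1.
  by rewrite big_split /= p1.
have q0 : forall j, 0 <= q j.
  move=> j; apply: sumr_ge0 => y _; exact: mulr_ge0.
have S5 : \prod_(j < t) (1 + q j) <= expR (\sum_(j < t) q j).
  rewrite expR_sum; apply: ler_prod => j _; apply/andP; split.
    by apply: addr_ge0.
  exact: expR_ge1Dx.
have rpos : 0 < (r%:R : R) by rewrite ltr0n.
have S6 : \sum_(j < t) q j <= exp_delay p i / r%:R + 3.
  have -> : \sum_(j < t) q j = \sum_(y < D.+1) p i y * (\sum_(j < t) (c j y : nat))%:R.
    rewrite /q exchange_big /=; apply: eq_bigr => y _.
    rewrite natr_sum mulr_sumr; apply: eq_bigr => j _.
    rewrite /c; case: eqP => [-> //|_] /=; by rewrite !mulr0.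
  apply: (@le_trans _ _ (\sum_(y < D.+1) p i y * (y%:R / r%:R + 3))).
    apply: ler_sum => y _; apply: ler_wpM2l => //.
    have h := @cnt_bound K D t r a i y r0 (ltnSE (ltn_ord y)) rr.
    have h' : (r%:R * (\sum_(j < t) (c j y : nat))%:R <= (y : nat)%:R + 3 * r%:R :> R).
      by rewrite -natrM -(natrM _ 3) -natrD ler_nat.
    rewrite -(ler_pM2l rpos) mulrDr mulrCA divff ?mulr1 ?lt0r_neq0 //; lra.
  have -> : \sum_(y < D.+1) p i y * (y%:R / r%:R + 3) =
      (\sum_(y < D.+1) (y : nat)%:R * p i y) / r%:R + 3 * \sum_(y < D.+1) p i y.
    rewrite mulr_suml mulr_sumr -big_split /=; apply: eq_bigr => y _.
    field; exact: lt0r_neq0.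
  by rewrite p1 mulr1.
have mu0 : 0 <= exp_delay p i / r%:R.
  apply: divr_ge0; last exact: ltW.
  by apply: sumr_ge0 => y _; apply: mulr_ge0.
have LT : lam <= ln (T%:R : R).
  rewrite /lam ler_ln ?qualifE /= ?ler_nat ?ltr0n //; lia.
have hT2 : 1 / (T%:R : R) ^+ 2 = expR (- (2 * ln (T%:R : R))).
  rewrite expRN (_ : 2 * ln (T%:R : R) = ln (T%:R : R) *+ 2); last by rewrite mulr_natl.
  rewrite -lnXn ?ltr0n; last lia.
  rewrite lnK ?div1r // qualifE /= exprn_gt0 // ltr0n; lia.
rewrite hT2.
apply: (le_trans S3); rewrite S4.
apply: (@le_trans _ _ (expR (- (lam * B)) * expR (exp_delay p i / r%:R + 3))).
  apply: ler_wpM2l; first exact: expR_ge0.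
  apply: (le_trans S5); by rewrite ler_expR.
rewrite -expRD ler_expR /B.
move: mu0 LT.
set mu := exp_delay p i / r%:R.
rewrite -mulrA -/mu.
set L := ln (T%:R : R).
move=> mu0 LT.
have h1 : 0 <= (2 * lam - 1) * mu by apply: mulr_ge0 => //; lra.
have h2 : 0 <= (2 * lam - 1) * L by apply: mulr_ge0; lra.
nra.
Qed.
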